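(* The map $n:\mathbb{T}\to\mathbb{N}$ defined below is a bijection.
   Context: Let $\mathbb{T}$ be the set of finite terms defined inductively by: the constant $e\in\mathbb{T}$; and if $X\in\mathbb{T}$ and $Xs=[X_1,\dots,X_k]$ ($k\ge 0$) is a finite list of elements of $\mathbb{T}$, then $v(X,Xs)\in\mathbb{T}$ and $w(X,Xs)\in\mathbb{T}$. Write $[\,]$ for the empty list and $[Y|Xs]$ for the list with first element $Y$ followed by the list $Xs$. Define $n:\mathbb{T}\to\mathbb{N}$ recursively by: $n(e)=0$; $n(v(X,[\,]))=2^{n(X)+1}-1$; $n(v(X,[Y|Xs]))=(n(w(Y,Xs))+1)\,2^{n(X)+1}-1$; $n(w(X,[\,]))=2^{n(X)+2}-2$; $n(w(X,[Y|Xs]))=(n(v(Y,Xs))+2)\,2^{n(X)+1}-2$. *)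

(* Defs.v *)
From mathcomp Require Import ssreflect ssrfun.
From Stdlib Require Import List Arith.
Import ListNotations.
Open Scope nat_scope.

Inductive term : Type :=
| e : term
| v : term -> list term -> term
| w : term -> list term -> term.

(* n : T -> N, defined by the five recursive equations of the paper.
   Locally, g true a Xs = n(v(X,Xs)) and g false a Xs = n(w(X,Xs)),
   where a = n(X) (the tag selects the constructor v / w). *)
Fixpoint n (t : term) : nat :=
  let g := fix g (isv : bool) (a : nat) (l : list term) {struct l} : nat :=
    match l with
    | [] => if isv then Nat.pow 2 (a + 1) - 1 else Nat.pow 2 (a + 2) - 2
    | y :: ys =>
        if isv then (g false (n y) ys + 1) * Nat.pow 2 (a + 1) - 1
        else (g true (n y) ys + 2) * Nat.pow 2 (a + 1) - 2
    end in
  match t with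
  | e => 0
  | v x xs => g true (n x) xs
  | w x xs => g false (n x) xs
  end.

Lemma n_e : n e = 0. Proof. reflexivity. Qed.
Lemma n_v_nil X : n (v X []) = Nat.pow 2 (n X + 1) - 1. Proof. reflexivity. Qed.
Lemma n_v_cons X Y Xs :
  n (v X (Y :: Xs)) = (n (w Y Xs) + 1) * Nat.pow 2 (n X + 1) - 1.
Proof. reflexivity. Qed.
Lemma n_w_nil X : n (w X []) = Nat.pow 2 (n X + 2) - 2. Proof. reflexivity. Qed.
Lemma n_w_cons X Y Xs :
  n (w X (Y :: Xs)) = (n (v Y Xs) + 2) * Nat.pow 2 (n X + 1) - 2.
Proof. reflexivity. Qed.

(* Main.v *)
Require Import Defs.
From mathcomp Require Import ssreflect ssrfun.
From Stdlib Require Import Arith Lia List ClassicalEpsilon.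
Import ListNotations.
Set Bullet Behavior "Strict Subproofs".

Lemma lt_pow2 a : a < 2 ^ a.
Proof. induction a; simpl; lia. Qed.

Lemma pow2S a : 2 ^ (a + 1) = 2 * 2 ^ a.
Proof. rewrite Nat.add_1_r Nat.pow_succ_r'. reflexivity. Qed.

Lemma pow2SS a : 2 ^ (a + 2) = 4 * 2 ^ a.
Proof. replace (a + 2) with (S (S a)) by lia. rewrite !Nat.pow_succ_r'. lia. Qed.

Definition mv (xs : list term) : nat :=
  match xs with [] => 0 | y :: ys => n (w y ys) end.

Lemma nv x xs : n (v x xs) + 1 = (mv xs + 1) * 2 ^ (n x + 1).
Proof.
  have := lt_pow2 (n x). have := pow2S (n x).
  destruct xs as [|y ys]; [rewrite n_v_nil | rewrite n_v_cons]; simpl; nia.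
Qed.

Lemma nw x xs : n (w x xs) + 2 =
  match xs with [] => 2 ^ (n x + 2) | y :: ys => (n (v y ys) + 2) * 2 ^ (n x + 1) end.
Proof.
  have := lt_pow2 (n x). have := pow2S (n x). have := pow2SS (n x).
  destruct xs as [|y ys]; [rewrite n_w_nil | rewrite n_w_cons]; nia.
Qed.

Lemma v_odd x xs : Nat.Odd (n (v x xs)).
Proof.
  have H := nv x xs. rewrite pow2S in H.
  exists ((mv xs + 1) * 2 ^ n x - 1). have := lt_pow2 (n x). nia.
Qed.

Lemma w_even x xs : Nat.Even (n (w x xs)) /\ 2 <= n (w x xs).
Proof.
  have H := nw x xs. have := lt_pow2 (n x).
  destruct xs as [|y ys].
  - rewrite pow2SS in H. split; [exists (2 * 2 ^ n x - 1)|]; nia.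
  - rewrite pow2S in H. split; [exists ((n (v y ys) + 2) * 2 ^ n x - 1)|]; nia.
Qed.

Lemma odd_unique p : forall q o o', Nat.Odd o -> Nat.Odd o' ->
  o * 2 ^ p = o' * 2 ^ q -> p = q /\ o = o'.
Proof.
  induction p as [|p IH]; intros [|q] o o' Ho Ho' E.
  - simpl in E. lia.
  - exfalso. apply (Nat.Even_Odd_False o); auto.
    replace o with (o' * (2 * 2 ^ q)) by (simpl in E; lia).
    apply Nat.Even_mul_r, Nat.Even_mul_l. exists 1; lia.
  - exfalso. apply (Nat.Even_Odd_False o'); auto.
    replace o' with (o * (2 * 2 ^ p)) by (simpl in E; lia).
    apply Nat.Even_mul_r, Nat.Even_mul_l. exists 1; lia.
  - rewrite !Nat.pow_succ_r' in E.
    destruct (IH q o o' Ho Ho') as [-> ->]; [lia|auto].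
Qed.

Lemma decomp M : 0 < M -> exists p o, Nat.Odd o /\ M = o * 2 ^ p.
Proof.
  induction M as [M IH] using lt_wf_ind. intros HM.
  destruct (Nat.Even_or_Odd M) as [[k Hk]|Ho].
  - destruct (IH k) as [p [o [Ho Hk']]]; try lia.
    exists (S p), o. split; auto. rewrite Nat.pow_succ_r'. lia.
  - exists 0, M. simpl. split; auto; lia.
Qed.

Lemma n_inj_aux N : forall t1 t2, n t1 = N -> n t2 = N -> t1 = t2.
Proof.
  induction N as [N IH] using lt_wf_ind.
  intros [|x xs|x xs] [|x' xs'|x' xs'] H1 H2.
  - reflexivity.
  - exfalso. destruct (v_odd x' xs') as [k Hk]. simpl in H1. lia.
  - exfalso. destruct (w_even x' xs') as [_ Hk]. simpl in H1. lia.
  - exfalso. destruct (v_odd x xs) as [k Hk]. simpl in H2. lia.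
  -
    have E1 := nv x xs. have E2 := nv x' xs'.
    have Hm : forall ys, Nat.Odd (mv ys + 1).
    { intros [|y ys]; rewrite /mv. { exists 0; lia. }
      destruct (w_even y ys) as [[k Hk] _]. exists k; lia. }
    destruct (odd_unique (n x + 1) (n x' + 1) (mv xs + 1) (mv xs' + 1))
      as [Ha Hb]; auto. lia.
    have Hx : x = x'.
    { apply (IH (n x)); try lia. have := lt_pow2 (n x + 1). nia. }
    subst x'. f_equal.
    destruct xs as [|y ys]; destruct xs' as [|y' ys']; rewrite /mv in Hb; auto.
    + have := w_even y' ys'. lia.
    + have := w_even y ys. lia.
    + have Hyy : w y ys = w y' ys'.
      { apply (IH (n (w y ys))); try lia. rewrite /mv in E1.
        have := lt_pow2 (n x + 1). nia. }
      injection Hyy as -> ->. reflexivity.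
  - exfalso. destruct (v_odd x xs) as [k Hk]. destruct (w_even x' xs') as [[k' Hk'] _]. lia.
  - exfalso. destruct (w_even x xs) as [_ Hk]. simpl in H2. lia.
  - exfalso. destruct (v_odd x' xs') as [k Hk]. destruct (w_even x xs) as [[k' Hk'] _]. lia.
  -
    have E1 := nw x xs. have E2 := nw x' xs'.
    have Hx : forall a, 2 ^ (a + 2) = 1 * 2 ^ (a + 2) by intros; lia.
    destruct xs as [|y ys]; destruct xs' as [|y' ys'].
    + rewrite Hx in E1. rewrite Hx in E2.
      destruct (odd_unique (n x + 2) (n x' + 2) 1 1) as [Ha _];
        try (exists 0; lia); try lia.
      have : x = x'. apply (IH (n x)); try lia. have := lt_pow2 (n x + 2). nia.
      intros ->; reflexivity.
    + rewrite Hx in E1.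
      destruct (odd_unique (n x + 2) (n x' + 1) 1 (n (v y' ys') + 2)) as [_ Hb];
        try (exists 0; lia); try lia.
      destruct (v_odd y' ys') as [k Hk]; exists (k+1); lia.
    + rewrite Hx in E2.
      destruct (odd_unique (n x + 1) (n x' + 2) (n (v y ys) + 2) 1) as [_ Hb];
        try (exists 0; lia); try lia.
      destruct (v_odd y ys) as [k Hk]; exists (k+1); lia.
    + destruct (odd_unique (n x + 1) (n x' + 1) (n (v y ys) + 2) (n (v y' ys') + 2))
        as [Ha Hb]; try lia.
      destruct (v_odd y ys) as [k Hk]; exists (k+1); lia.
      destruct (v_odd y' ys') as [k Hk]; exists (k+1); lia.
      have : x = x'. apply (IH (n x)); try lia. have := lt_pow2 (n x + 1). nia.
      intros Hxx; subst x'.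
      have : v y ys = v y' ys'. apply (IH (n (v y ys))); try lia.
      have := lt_pow2 (n x + 1). nia.
      intros H; injection H as -> ->. reflexivity.
Qed.

Lemma n_surj N : exists t, n t = N.
Proof.
  induction N as [N IH] using lt_wf_ind.
  destruct N as [|N']. { exists e. reflexivity. }
  set N := S N'.
  destruct (Nat.Even_or_Odd N) as [HE|HO].
  -
    destruct (decomp (N + 2)) as [p [o [Ho Hd]]]; first lia.
    have Hp := lt_pow2 p.
    destruct HE as [h Hh].
    destruct p as [|p].
    { exfalso. apply (Nat.Even_Odd_False o); auto. exists (h+1). simpl in Hd. lia. }
    rewrite Nat.pow_succ_r' in Hd.
    destruct Ho as [j Hj].
    destruct j as [|j].
    +
      destruct p as [|p].
      { simpl in Hd. lia. }
      destruct (IH p) as [x Hx].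
      { rewrite Nat.pow_succ_r' in Hd. have := lt_pow2 p. nia. }
      exists (w x []). rewrite n_w_nil Hx pow2SS.
      rewrite Nat.pow_succ_r' in Hd. lia.
    + destruct (IH p) as [x Hx]. { have := lt_pow2 p. nia. }
      destruct (IH (2 * j + 1)) as [t Ht]. { have := lt_pow2 p. nia. }
      destruct t as [|y ys|y ys].
      * simpl in Ht; lia.
      * exists (w x (y :: ys)). rewrite n_w_cons Ht Hx pow2S. nia.
      * destruct (w_even y ys) as [[k Hk] _]. lia.
  -
    destruct (decomp (N + 1)) as [p [o [Ho Hd]]]; first lia.
    have Hp := lt_pow2 p.
    destruct HO as [h Hh].
    destruct p as [|p].
    { exfalso. apply (Nat.Even_Odd_False o); auto. exists (h+1). simpl in Hd. lia. }
    rewrite Nat.pow_succ_r' in Hd.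
    destruct Ho as [j Hj]. destruct (IH p) as [x Hx]. { have := lt_pow2 p. nia. }
    destruct j as [|j].
    + exists (v x []). rewrite n_v_nil Hx pow2S. lia.
    + destruct (IH (2 * j + 2)) as [t Ht]. { have := lt_pow2 p. nia. }
      destruct t as [|y ys|y ys].
      * simpl in Ht; lia.
      * destruct (v_odd y ys) as [k Hk]. lia.
      * exists (v x (y :: ys)). rewrite n_v_cons Ht Hx pow2S. nia.
Qed.

Theorem proposition2 : bijective n.
Proof.
  pose g := fun N => proj1_sig (constructive_indefinite_description _ (n_surj N)).
  have Hg : forall N, n (g N) = N.
  { intros N. rewrite /g. exact (proj2_sig (constructive_indefinite_description _ (n_surj N))). }
  exists g; auto.
  intros t. apply (n_inj_aux (n t)); auto.
Qed.
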